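(* Let $\mathit{VI}$ be a finite set of variables with $\#\mathit{VI}=n$. For all $j,k\in\mathbb{N}$ with $1\le j\le k\le n$, we have $\mathit{TS}_j\subseteq\mathit{TSD}_k$.
   Context: $\mathit{SG}=\wp(\mathit{VI})\setminus\{\emptyset\}$ and $\mathit{SH}=\wp(\mathit{SG})$, ordered by set inclusion. For $S\in\mathit{SG}$, $\mathrm{tuples}_j(S)=\{T\subseteq S\mid \#T=j\}$, and for $sh\in\mathit{SH}$, $\mathrm{tuples}_j(sh)=\bigcup_{S'\in sh}\mathrm{tuples}_j(S')$. Define $\rho_{\mathit{TS}_j}(sh)=\{S\in\mathit{SG}\mid \mathrm{tuples}_j(S)\subseteq\mathrm{tuples}_j(sh)\}$ and $\mathit{TS}_j=\rho_{\mathit{TS}_j}(\mathit{SH})$. Define $\rho_{\mathit{TSD}_k}(sh)=\{\,S\in\mathit{SG}\mid \forall T\subseteq S:\ \#T<k\implies S=\bigcup\{U\in sh\mid T\subseteq U\subseteq S\}\,\}$ and $\mathit{TSD}_k=\rho_{\mathit{TSD}_k}(\mathit{SH})$. *)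

(* Defs.v *)
From mathcomp Require Import all_boot.
Set Implicit Arguments. Unset Strict Implicit. Unset Printing Implicit Defensive.

Section SharingDefs.
Variable VI : finType.

Definition is_SG (S : {set VI}) : bool := S != set0.

Definition is_SH (sh : {set {set VI}}) : bool := [forall S in sh, is_SG S].

Definition tuples (j : nat) (S : {set VI}) : {set {set VI}} :=
  [set T in powerset S | #|T| == j].

Definition tuplesSH (j : nat) (sh : {set {set VI}}) : {set {set VI}} :=
  \bigcup_(S' in sh) tuples j S'.

Definition rho_TS (j : nat) (sh : {set {set VI}}) : {set {set VI}} :=
  [set S | is_SG S & tuples j S \subset tuplesSH j sh].

Definition rho_TSD (k : nat) (sh : {set {set VI}}) : {set {set VI}} :=
  [set S | is_SG S &
     [forall T : {set VI}, (T \subset S) && (#|T| < k) ==>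
        (S == \bigcup_(U in sh | (T \subset U) && (U \subset S)) U)]].

Definition in_TS (j : nat) (sh : {set {set VI}}) : Prop :=
  exists sh0, is_SH sh0 /\ sh = rho_TS j sh0.

Definition in_TSD (k : nat) (sh : {set {set VI}}) : Prop :=
  exists sh0, is_SH sh0 /\ sh = rho_TSD k sh0.

End SharingDefs.

(* Main.v *)
Require Import Defs.
From mathcomp Require Import all_boot.

Theorem corollary3p12 (VI : finType) (n j k : nat) :
  #|VI| = n -> 1 <= j -> j <= k -> k <= n ->
  forall sh : {set {set VI}}, in_TS j sh -> in_TSD k sh.
Proof.
move=> _ j1 jk _ sh [sh0 [_ ->]].
exists (rho_TS j sh0); split.
  apply/forallP => S; apply/implyP; rewrite /rho_TS inE => /andP[] //.
apply/setP => S; rewrite /rho_TSD /rho_TS !inE.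
case SG: (is_SG S) => //=.
apply/idP/idP.
- move=> H; apply/forallP => T; apply/implyP => /andP[TS _].
  apply/eqP/setP => x; apply/idP/idP.
  + move=> xS; apply/bigcupP; exists S => //.
    by rewrite inE SG H TS subxx.
  + by case/bigcupP => U /andP[_ /andP[_ US]] xU; exact: (subsetP US x xU).
- move=> H; apply/subsetP => T; rewrite inE powersetE => /andP[TS /eqP cT].
  have : T != set0 by rewrite -card_gt0 cT.
  case/set0Pn => x xT.
  have := forallP H (T :\ x).
  have lt : #|T :\ x| < k.
    move: (cardsD1 x T); rewrite xT cT => e.
    by move: jk; rewrite e /= add1n.
  rewrite (subset_trans (subD1set T x) TS) lt /= => /eqP SE.
  have xS : x \in S by apply: (subsetP TS).
  rewrite SE in xS; case/bigcupP: xS => U /andP[UX /andP[T'U US]] xU.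
  rewrite inE in UX; case/andP: UX => _ UH.
  apply: (subsetP UH); rewrite inE powersetE cT eqxx andbT.
  apply/subsetP => y yT; case: (y =P x) => [->//|yx].
  by apply: (subsetP T'U); rewrite !inE yT andbT; apply/eqP.
Qed.
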